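(* Let $F_1,F_2\colon \mathbb{R}^n \rightrightarrows \mathbb{R}^m$ be nearly convex set-valued mappings and $\varepsilon\ge 0$. Suppose that $$\mathrm{ri}(\mathrm{dom}\, F_1) \cap \mathrm{ri}(\mathrm{dom}\, F_2) \neq\emptyset .$$ Let $(\bar x,\bar y)\in\mathrm{gph}(F_1+F_2)$, where $(F_1+F_2)(x)=F_1(x)+F_2(x)$, and let $S(\bar x, \bar y)=\{(\bar y_1, \bar y_2) \in \mathbb{R}^m \times \mathbb{R}^m \mid \bar y=\bar y_1 +\bar y_2,\ \bar y_i\in F_i(\bar x),\ i=1,2 \}$. Then for every $v\in \mathbb{R}^m$ and every $(\bar y_1, \bar y_2) \in S(\bar x, \bar y)$, $$D^*_\varepsilon(F_1+F_2)(\bar x, \bar y)(v)=\bigcup_{\substack{\varepsilon_1\geq 0,\ \varepsilon_2\geq 0,\\ \varepsilon_1+\varepsilon_2=\varepsilon}}\big[D^*_{\varepsilon_1} F_1(\bar x, \bar y_1)(v)+D^*_{\varepsilon_2}F_2 (\bar x, \bar y_2)(v)\big].$$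
   Context: A set $D$ is nearly convex if there is a convex $E$ with $E\subset D\subset\overline{E}$. A set-valued mapping $F\colon\mathbb{R}^n\rightrightarrows\mathbb{R}^m$ has domain $\mathrm{dom}\,F=\{x\mid F(x)\ne\emptyset\}$ and graph $\mathrm{gph}\,F=\{(x,y)\mid y\in F(x)\}$; it is nearly convex if its graph is nearly convex. $\mathrm{ri}\,D=\{a\in D\mid\exists\delta>0,\ B(a;\delta)\cap\mathrm{aff}\,D\subset D\}$. For nonempty $\Omega$, $\bar z\in\Omega$, $\varepsilon\ge0$: $N_\varepsilon(\bar z;\Omega)=\{\xi\mid\langle\xi,z-\bar z\rangle\le\varepsilon\ \forall z\in\Omega\}$. For $(\bar x,\bar y)\in\mathrm{gph}\,F$, the $\varepsilon$-coderivative is $D^*_\varepsilon F(\bar x,\bar y)(v)=\{u\in\mathbb{R}^n\mid(u,-v)\in N_\varepsilon((\bar x,\bar y);\mathrm{gph}\,F)\}$. Sums of sets are Minkowski sums. *)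

(* Defs.v *)
From HB Require Import structures.
From mathcomp Require Import all_boot all_order all_algebra.
From mathcomp Require Import all_classical all_reals all_analysis.
Set Implicit Arguments. Unset Strict Implicit. Unset Printing Implicit Defensive.
Import Order.TTheory GRing.Theory Num.Theory.
Import numFieldNormedType.Exports.
Local Open Scope classical_set_scope.
Local Open Scope ring_scope.

Section Defs.
Variable R : realType.

Definition dotv (n : nat) (u v : 'rV[R]_n) : R := \sum_(i < n) u ord0 i * v ord0 i.

Definition dotp (n m : nat) (p q : 'rV[R]_n * 'rV[R]_m) : R :=
  dotv p.1 q.1 + dotv p.2 q.2.

Definition convex_pair (n m : nat) (E : set ('rV[R]_n * 'rV[R]_m)) : Prop :=
  forall p q t, E p -> E q -> 0 <= t -> t <= 1 ->
    E (t *: p.1 + (1 - t) *: q.1, t *: p.2 + (1 - t) *: q.2).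

Definition nearly_convex_pair (n m : nat) (D : set ('rV[R]_n * 'rV[R]_m)) : Prop :=
  exists E, convex_pair E /\ E `<=` D /\ D `<=` closure E.

Definition dom (n m : nat) (F : 'rV[R]_n -> set 'rV[R]_m) : set 'rV[R]_n :=
  [set x | F x !=set0].

Definition gph (n m : nat) (F : 'rV[R]_n -> set 'rV[R]_m) : set ('rV[R]_n * 'rV[R]_m) :=
  [set p | F p.1 p.2].

Definition nearly_convex_map (n m : nat) (F : 'rV[R]_n -> set 'rV[R]_m) : Prop :=
  nearly_convex_pair (gph F).

Definition aff (n : nat) (D : set 'rV[R]_n) : set 'rV[R]_n :=
  [set x | exists (k : nat) (pts : 'I_k -> 'rV[R]_n) (w : 'I_k -> R),
      (forall i, D (pts i)) /\ \sum_(i < k) w i = 1 /\ x = \sum_(i < k) w i *: pts i].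

Definition ri (n : nat) (D : set 'rV[R]_n) : set 'rV[R]_n :=
  [set a | D a /\ exists delta : R, 0 < delta /\ ball a delta `&` aff D `<=` D].

Definition eps_normal (n m : nat) (eps : R) (zbar : 'rV[R]_n * 'rV[R]_m)
    (Omega : set ('rV[R]_n * 'rV[R]_m)) : set ('rV[R]_n * 'rV[R]_m) :=
  [set xi | forall z, Omega z -> dotp xi (z.1 - zbar.1, z.2 - zbar.2) <= eps].

Definition eps_coder (n m : nat) (eps : R) (F : 'rV[R]_n -> set 'rV[R]_m)
    (xbar : 'rV[R]_n) (ybar : 'rV[R]_m) (v : 'rV[R]_m) : set 'rV[R]_n :=
  [set u | eps_normal eps (xbar, ybar) (gph F) (u, - v)].

Definition mink_sum (k : nat) (A B : set 'rV[R]_k) : set 'rV[R]_k :=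
  [set z | exists a b, A a /\ B b /\ z = a + b].

Definition map_sum (n m : nat) (F1 F2 : 'rV[R]_n -> set 'rV[R]_m) : 'rV[R]_n -> set 'rV[R]_m :=
  fun x => mink_sum (F1 x) (F2 x).

End Defs.

(* Main.v *)
Require Import Defs.
From HB Require Import structures.
From mathcomp Require Import all_boot all_order all_algebra.
From mathcomp Require Import all_classical all_reals all_analysis.
From mathcomp Require Import ring lra.
Import Order.TTheory GRing.Theory Num.Theory.
Import numFieldNormedType.Exports.
Local Open Scope classical_set_scope.
Local Open Scope ring_scope.
Set Implicit Arguments. Unset Strict Implicit. Unset Printing Implicit Defensive.

Section Aux.
Variable R : realType.

Lemma dotvDr n (g z1 z2 : 'rV[R]_n) : dotv g (z1 + z2) = dotv g z1 + dotv g z2.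
Proof. rewrite /dotv -big_split; apply: eq_bigr => i _; rewrite !mxE /=; ring. Qed.
Lemma dotvZr n (g z : 'rV[R]_n) a : dotv g (a *: z) = a * dotv g z.
Proof. rewrite /dotv mulr_sumr; apply: eq_bigr => i _; rewrite !mxE /=; ring. Qed.
Lemma dotvNr n (g z : 'rV[R]_n) : dotv g (- z) = - dotv g z.
Proof. rewrite /dotv -sumrN; apply: eq_bigr => i _; rewrite !mxE /=; ring. Qed.
Lemma dotvBr n (g z1 z2 : 'rV[R]_n) : dotv g (z1 - z2) = dotv g z1 - dotv g z2.
Proof. by rewrite dotvDr dotvNr. Qed.
Lemma dotvDl n (g1 g2 z : 'rV[R]_n) : dotv (g1 + g2) z = dotv g1 z + dotv g2 z.
Proof. rewrite /dotv -big_split; apply: eq_bigr => i _; rewrite !mxE /=; ring. Qed.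
Lemma dotvNl n (g z : 'rV[R]_n) : dotv (- g) z = - dotv g z.
Proof. rewrite /dotv -sumrN; apply: eq_bigr => i _; rewrite !mxE /=; ring. Qed.
Lemma dotvZl n (g z : 'rV[R]_n) a : dotv (a *: g) z = a * dotv g z.
Proof. rewrite /dotv mulr_sumr; apply: eq_bigr => i _; rewrite !mxE /=; ring. Qed.
Lemma dotv0l n (z : 'rV[R]_n) : dotv 0 z = 0.
Proof. rewrite /dotv big1 // => i _; rewrite mxE; ring. Qed.
Lemma dotv0r n (z : 'rV[R]_n) : dotv z 0 = 0.
Proof. rewrite /dotv big1 // => i _; rewrite mxE; ring. Qed.
Lemma dotv_delta n (i0 : 'I_n) (z : 'rV[R]_n) : dotv (delta_mx ord0 i0) z = z ord0 i0.
Proof.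
rewrite /dotv (bigD1 i0) //= big1 ?addr0 => [|i /negPf Hi]; rewrite !mxE ?Hi ?eqxx /=; ring.
Qed.

Definition Wk n k (z : 'rV[R]_n) := forall i : 'I_n, (k <= i)%N -> z ord0 i = 0.

Lemma hb_core n (S : 'rV[R]_n -> R -> Prop) eps :
  (forall z1 t1 z2 t2 mu, S z1 t1 -> S z2 t2 -> 0 <= mu -> mu <= 1 ->
      S (mu *: z1 + (1 - mu) *: z2) (mu * t1 + (1 - mu) * t2)) ->
  (forall t, S 0 t -> t <= eps) ->
  (forall z t, S z t -> exists lam t', 0 < lam /\ S (- (lam *: z)) t') ->
  exists g, forall z t, S z t -> t <= eps + dotv g z.
Proof.
move=> Sconv S0 Sicr.
suff H : forall k, (k <= n)%N -> exists g, forall z t, S z t -> Wk k z -> t <= eps + dotv g z.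
  have [g Hg] := H n (leqnn n); exists g => z t Szt; apply: Hg => // i.
  by rewrite leqNgt ltn_ord.
elim => [|k IH] hk.
  exists 0 => z t Szt W0.
  have z0 : z = 0 by apply/rowP => j; rewrite mxE W0.
  by rewrite dotv0l addr0; apply: S0; rewrite -z0.
have [g Hg] := IH (ltnW hk).
pose i0 : 'I_n := Ordinal hk.
have Wi0 : forall z, Wk k.+1 z -> z ord0 i0 = 0 -> Wk k z.
  move=> z Wz zi0 i; rewrite leq_eqVlt => /orP [/eqP ki|]; last exact: Wz.
  by have -> : i = i0 by apply/val_inj => /=.
pose A := fun a : R => exists z t, S z t /\ Wk k.+1 z /\ 0 < z ord0 i0 /\
                          a = (t - eps - dotv g z) / z ord0 i0.
have ub : forall z t, S z t -> Wk k.+1 z -> z ord0 i0 < 0 ->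
    ubound A ((eps + dotv g z - t) / (- z ord0 i0)).
  move=> z2 t2 S2 W2 c2lt a [z1 [t1 [S1 [W1 [c1gt ->]]]]].
  set c1 := z1 ord0 i0; set c2 := - z2 ord0 i0.
  have c2gt : 0 < c2 by rewrite /c2 oppr_gt0.
  have c12 : 0 < c1 + c2 by rewrite addr_gt0.
  pose mu := c2 / (c1 + c2).
  have mu0 : 0 <= mu by rewrite divr_ge0 // ltW.
  have mu1 : mu <= 1 by rewrite ler_pdivrMr // mul1r lerDr ltW.
  have Sc := Sconv _ _ _ _ _ S1 S2 mu0 mu1.
  have Wc : Wk k (mu *: z1 + (1 - mu) *: z2).
    apply: Wi0.
      move=> i hi; rewrite !mxE W1 ?W2 //; ring.
    rewrite !mxE -/c1.
    have -> : z2 ord0 i0 = - c2 by rewrite /c2 opprK.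
    rewrite /mu; field; exact: lt0r_neq0.
  have := Hg _ _ Sc Wc; rewrite dotvDr !dotvZr => Hc.
  rewrite ler_pdivrMr // mulrAC ler_pdivlMr //.
  have e1 : 1 - mu = c1 / (c1 + c2) by rewrite /mu; field; exact: lt0r_neq0.
  move: Hc; rewrite e1 /mu => Hc.
  have Hc' : c2 * t1 + c1 * t2 <= (c1 + c2) * eps + c2 * dotv g z1 + c1 * dotv g z2.
    have := Hc; rewrite -(ler_pM2l c12) => Hc2.
    have E1 : (c1 + c2) * (c2 / (c1 + c2) * t1 + c1 / (c1 + c2) * t2) = c2 * t1 + c1 * t2.
      by field; exact: lt0r_neq0.
    have E2 : (c1 + c2) * (eps + (c2 / (c1 + c2) * dotv g z1 + c1 / (c1 + c2) * dotv g z2))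
       = (c1 + c2) * eps + c2 * dotv g z1 + c1 * dotv g z2.
      by field; exact: lt0r_neq0.
    by rewrite -E1 -E2.
  rewrite -subr_ge0.
  have -> : (eps + dotv g z2 - t2) * c1 - (t1 - eps - dotv g z1) * c2 =
    ((c1 + c2) * eps + c2 * dotv g z1 + c1 * dotv g z2) - (c2 * t1 + c1 * t2) by ring.
  by rewrite subr_ge0.
have key : forall beta, (forall a, A a -> a <= beta) ->
   (forall z t, S z t -> Wk k.+1 z -> z ord0 i0 < 0 -> beta <= (eps + dotv g z - t) / (- z ord0 i0)) ->
   exists g', forall z t, S z t -> Wk k.+1 z -> t <= eps + dotv g' z.
  move=> beta H1 H2; exists (g + beta *: delta_mx ord0 i0) => z t Szt Wz.
  rewrite dotvDl dotvZl dotv_delta.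
  case: (ltrgtP (z ord0 i0) 0) => [zn|zp|z0].
  - have := H2 _ _ Szt Wz zn; rewrite ler_pdivlMr ?oppr_gt0 // => hb; nra.
  - have : A ((t - eps - dotv g z) / z ord0 i0) by exists z, t.
    move/H1; rewrite ler_pdivrMr // => hb; nra.
  - rewrite z0 mulr0 addr0; apply: Hg => //; exact: Wi0.
have neg : forall z t, S z t -> Wk k.+1 z ->
    exists z' t', [/\ S z' t', Wk k.+1 z', (0 < z ord0 i0 -> z' ord0 i0 < 0)
                   & (z ord0 i0 < 0 -> 0 < z' ord0 i0)].
  move=> z t Szt Wz; have [lam [t' [lam0 S']]] := Sicr _ _ Szt.
  exists (- (lam *: z)), t'; split => //.
  - by move=> i hi; rewrite !mxE Wz // mulr0 oppr0.
  - by rewrite !mxE oppr_lt0 => zp; apply: mulr_gt0.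
  - by rewrite !mxE oppr_gt0 => zn; rewrite pmulr_rlt0.
case: (pselect (exists a, A a)) => [[a Aa]|nA].
  have hs : has_sup A.
    split; first by exists a.
    case: Aa => z1 [t1 [S1 [W1 [c1 _]]]].
    have [z' [t' [S' W' /(_ c1) z'n _]]] := neg _ _ S1 W1.
    by exists ((eps + dotv g z' - t') / (- z' ord0 i0)); apply: ub.
  apply: (key (sup A)); first by move=> b Ab; apply: sup_upper_bound.
  move=> z t Szt Wz zn; apply: ge_sup; first by exists a.
  exact: ub.
apply: (key 0) => [b Ab|z t Szt Wz zn]; first by exfalso; apply: nA; exists b.
exfalso; apply: nA.
have [z' [t' [S' W' _ /(_ zn) z'p]]] := neg _ _ Szt Wz.
by exists ((t' - eps - dotv g z') / z' ord0 i0), z', t'.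
Qed.

Definition cvx n (Z : set 'rV[R]_n) := forall z1 z2 mu, Z z1 -> Z z2 -> 0 <= mu -> mu <= 1 ->
  Z (mu *: z1 + (1 - mu) *: z2).

Definition zero_at n (i0 : 'I_n) (z : 'rV[R]_n) : 'rV[R]_n :=
  \row_j (if j == i0 then 0 else z ord0 j).

Lemma slice_core r k : (k <= r)%N -> forall (Z : set 'rV[R]_r), cvx Z ->
  (forall z, Z z -> Wk k z) -> forall delta, 0 < delta ->
  (forall c, Wk k c -> (forall j, `|c ord0 j| <= delta) -> forall eta, 0 < eta ->
     exists z, Z z /\ forall j, `|z ord0 j - c ord0 j| < eta) -> Z 0.
Proof.
elim: k => [|k IH] hk Z Zc ZW delta d0 Hd.
  have [|//|z [Zz _]] := Hd 0 _ _ 1 ltr01.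
  - by move=> i _; rewrite mxE.
  - by move=> j; rewrite mxE normr0 ltW.
  by have <- : z = 0 by apply/rowP => j; rewrite mxE ZW.
pose i0 : 'I_r := Ordinal hk.
have side : forall sg : R, sg = 1 \/ sg = -1 ->
    exists z, Z z /\ delta / 4 <= sg * z ord0 i0 /\ zero_at i0 z = 0.
  move=> sg hsg.
  have sg2 : sg * sg = 1 by case: hsg => ->; ring.
  have sgn : `|sg| = 1 by case: hsg => ->; rewrite ?normrN normr1.
  pose Z' := fun w => exists z, Z z /\ delta / 4 <= sg * z ord0 i0 /\ w = zero_at i0 z.
  suff : Z' 0 by case=> z [Zz [h1 h2]]; exists z; split => //; split => //; rewrite -h2.
  apply: (IH (ltnW hk) Z' _ _ (delta / 2)).
  - move=> w1 w2 mu [z1 [Z1 [h1 ->]]] [z2 [Z2 [h2 ->]]] mu0 mu1.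
    exists (mu *: z1 + (1 - mu) *: z2); split; first exact: Zc.
    split; first by rewrite !mxE; nra.
    by apply/rowP => j; rewrite !mxE; case: ifP => _ //; ring.
  - move=> w [z [Zz [_ ->]]] i hi; rewrite mxE; case: ifP => // /negbT hi0.
    apply: ZW => //; rewrite ltn_neqAle hi andbT; apply/eqP => ki.
    by move/eqP: hi0; apply; apply/val_inj.
  - by rewrite divr_gt0.
  move=> c Wc cb eta eta0.
  pose c' := c + (sg * (delta / 2)) *: delta_mx ord0 i0.
  have [|||z [Zz zc]] := Hd c' _ _ (Num.min eta (delta / 4)).
  - move=> i hi; rewrite !mxE Wc; last exact: ltnW.
    have -> : (i == i0) = false by apply/negbTE/eqP => E; move: hi; rewrite E /= ltnn.
    by rewrite andbF mulr0 addr0.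
  - move=> j; rewrite !mxE; case: (eqVneq j i0) => [->|jn].
      rewrite Wc //= mulr1 add0r normrM sgn mul1r ger0_norm ?divr_ge0 ?ltW //.
      lra.
    rewrite andbF mulr0 addr0; apply: le_trans (cb j) _.
    lra.
  - by rewrite lt_min eta0 divr_gt0.
  exists (zero_at i0 z); split.
    exists z; split => //; split => //.
    have := zc i0; rewrite lt_min => /andP [_].
    rewrite !mxE Wc //= eqxx mulr1 add0r => hz.
    have : `|sg * z ord0 i0 - delta / 2| < delta / 4.
      have E : sg * z ord0 i0 - delta / 2 = sg * (z ord0 i0 - sg * (delta / 2)) by rewrite mulrBr mulrA sg2 mul1r.
      by rewrite E normrM sgn mul1r.
    rewrite ltr_norml => /andP [h _]; apply: ltW; move: h; rewrite ltrBrDr.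
    suff -> : - (delta / 4) + delta / 2 = delta / 4 by [].
    by field.
  move=> j; rewrite !mxE; case: (eqVneq j i0) => [->|jn].
    by rewrite Wc //= subr0 normr0.
  have := zc j; rewrite lt_min => /andP [h _]; move: h.
  by rewrite !mxE (negbTE jn) andbF mulr0 addr0.
have [zp [Zp [hp Ep]]] := side 1 (or_introl erefl).
have [zn [Zn [hn En]]] := side (-1) (or_intror erefl).
rewrite mul1r in hp; rewrite mulN1r in hn.
set p := zp ord0 i0 in hp; set q := zn ord0 i0 in hn.
have p0 : 0 < p by apply: lt_le_trans hp; rewrite divr_gt0.
have q0 : q < 0 by rewrite -oppr_gt0; apply: lt_le_trans hn; rewrite divr_gt0.
pose mu := - q / (p - q).
have pq : 0 < p - q by rewrite subr_gt0; apply: lt_trans p0.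
have -> : (0 : 'rV_r) = mu *: zp + (1 - mu) *: zn.
  apply/rowP => j; rewrite !mxE; case: (eqVneq j i0) => [->|jn].
    rewrite -/p -/q /mu; field; exact: lt0r_neq0.
  have := congr1 (fun w : 'rV_r => w ord0 j) Ep; have := congr1 (fun w : 'rV_r => w ord0 j) En.
  rewrite !mxE (negbTE jn) => <- <-; ring.
apply: Zc => //; first by rewrite /mu divr_ge0 // ?oppr_ge0 ltW.
by rewrite /mu ler_pdivrMr // mul1r; lra.
Qed.

Lemma ball_rV_entry n (x y : 'rV[R]_n) e j : ball x e y -> `|x ord0 j - y ord0 j| < e.
Proof.
rewrite -ball_normE /ball_ /= => H; apply: le_lt_trans H.
have -> : x ord0 j - y ord0 j = (x - y) ord0 j by rewrite !mxE.
have -> : `|x - y| = mx_norm (x - y) by [].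
rewrite mx_normrE; apply/bigmax_geP; right => /=.
by exists (ord0, j).
Qed.

Lemma ball_rVP n (x y : 'rV[R]_n) e : 0 < e -> (forall j, `|x ord0 j - y ord0 j| < e) -> ball x e y.
Proof.
move=> e0 H; rewrite -ball_normE /ball_ /=.
have -> : `|x - y| = mx_norm (x - y) by [].
rewrite mx_normrE.
apply/bigmax_ltP; split => // -[i j] _ /=; rewrite (ord1 i) !mxE; exact: H.
Qed.

Lemma mulmx_entry_bound s k (a : 'rV[R]_s) (B : 'M[R]_(s, k)) t j : 0 <= t ->
  (forall i, `|a ord0 i| <= t) -> `|(a *m B) ord0 j| <= t * \sum_i \sum_l `|B i l|.
Proof.
move=> t0 Ha; rewrite !mxE; apply: le_trans (ler_norm_sum _ _ _) _.
rewrite mulr_sumr; apply: ler_sum => i _; rewrite normrM.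
apply: ler_pM => //.
by rewrite (bigD1 j) //= lerDl sumr_ge0.
Qed.

Lemma aff_comb n (D : set 'rV[R]_n) y s (M : 'M[R]_(s, n)) (a : 'rV[R]_s) :
  D y -> (forall i, D (y + row i M)) -> aff D (y + a *m M).
Proof.
move=> Dy DM.
exists s.+1, (fun i : 'I_s.+1 => if unlift ord0 i is Some i' then y + row i' M else y).
exists (fun i : 'I_s.+1 => if unlift ord0 i is Some i' then a ord0 i' else 1 - \sum_i a ord0 i).
split; first by move=> i; case: (unlift ord0 i).
split.
  rewrite big_ord_recl unlift_none.
  have -> : forall F : 'I_s -> R, \sum_(i < s) match unlift ord0 (lift ord0 i) with
      | Some i' => F i' | None => 1 - \sum_i a ord0 i end = \sum_(i < s) F i.
    by move=> F; apply: eq_bigr => i _; rewrite liftK.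
  by rewrite subrK.
rewrite big_ord_recl unlift_none.
have -> : \sum_(i < s) (match unlift ord0 (lift ord0 i) with
      | Some i' => a ord0 i' | None => 1 - \sum_i a ord0 i end *:
      match unlift ord0 (lift ord0 i) with
      | Some i' => y + row i' M | None => y end) = \sum_(i < s) a ord0 i *: (y + row i M).
  by apply: eq_bigr => i _; rewrite liftK.
apply/rowP => j; rewrite !mxE summxE.
have -> : \sum_k (a ord0 k *: (y + row k M)) 0 j =
    \sum_k (a ord0 k * y ord0 j + a ord0 k * M k j).
  by apply: eq_bigr => k _; rewrite !mxE mulrDr.
rewrite big_split /= -mulr_suml.
have -> : (0 : 'I_1) = ord0 by [].
ring.
Qed.
Lemma small_mul (d K : R) : 0 < d -> 0 <= K -> d / (K + 1) / 2 * K < d.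
Proof.
move=> d0 K0; set e := d / (K + 1).
have K1 : 0 < K + 1 by rewrite ltr_pwDr.
have E : d = e * (K + 1) by rewrite /e mulfVK // gt_eqF.
have e0 : 0 < e by rewrite /e divr_gt0.
rewrite [X in _ < X]E; nra.
Qed.

Lemma small_mul_pos (d K : R) : 0 < d -> 0 <= K -> 0 < d / (K + 1) / 2.
Proof. by move=> d0 K0; rewrite !divr_gt0 // ltr_pwDr. Qed.

Lemma row_rV n (i : 'I_1) (v : 'rV[R]_n) : row i v = v.
Proof. by apply/rowP => j; rewrite !mxE (ord1 i). Qed.

Lemma core_R n (C D : set 'rV[R]_n) y delta :
  cvx C -> C `<=` D -> D `<=` closure C -> D y -> 0 < delta ->
  (forall p : 'rV[R]_n, ball y delta p -> aff D p -> D p) -> C y.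
Proof.
move=> Cc CD DC Dy d0 Hri.
pose P := fun k => `[< exists s (M : 'M[R]_(s, n)), (forall i, D (y + row i M)) /\ \rank M = k >].
have P0 : exists k, P k.
  by exists 0%N; apply/asboolP; exists 0%N, 0; split => [[]//|]; rewrite mxrank0.
have Pub : forall k, P k -> (k <= n)%N.
  by move=> k /asboolP [s [M [_ <-]]]; exact: rank_leq_col.
case: (ex_maxnP P0 Pub) => k /asboolP [s [M [DM rM]]] kmax.
have span : forall d, D d -> (d - y <= M)%MS.
  move=> d Dd; apply/negP => nd.
  have : P (\rank (col_mx M (d - y))).
    apply/asboolP; exists (s + 1)%N, (col_mx M (d - y)); split => // i.
    case: (splitP i) => [i1 E|i2 E].
      have -> : i = lshift 1 i1 by apply/val_inj.
      by rewrite rowKu.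
    have -> : i = rshift s i2 by apply/val_inj.
    by rewrite rowKd row_rV addrC subrK.
  move/kmax; rewrite -rM => hle.
  have sub : (M <= col_mx M (d - y))%MS by have := addsmxSl M (d - y); rewrite addsmxE.
  have [le eqv] := mxrank_leqif_sup sub.
  move: eqv; rewrite col_mx_sub submx_refl (negbTE (introN idP nd)) /= => /negbT.
  by rewrite eqn_leq le hle.
pose T := row_base M.
have Tfree : row_free T := row_base_free M.
have /andP [TM MT] : (T == M)%MS by apply/eqmxP; exact: eq_row_base.
have subT : forall z : 'rV[R]_n, (z <= M)%MS -> (z <= T)%MS by move=> z zM; exact: submx_trans zM MT.
pose Z' := fun c : 'rV[R]_(\rank M) => C (y + c *m T).
suff : Z' 0 by rewrite /Z' mul0mx addr0.
pose KT := \sum_i \sum_l `|T i l|.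
pose KP := \sum_i \sum_l `|pinvmx T i l|.
have KT0 : 0 <= KT by apply: sumr_ge0 => i _; apply: sumr_ge0.
have KP0 : 0 <= KP by apply: sumr_ge0 => i _; apply: sumr_ge0.
apply: (@slice_core _ _ (leqnn _) Z' _ _ (delta / (KT + 1) / 2)).
- move=> c1 c2 mu h1 h2 mu0 mu1; rewrite /Z'.
  have -> : y + (mu *: c1 + (1 - mu) *: c2) *m T = mu *: (y + c1 *m T) + (1 - mu) *: (y + c2 *m T).
    rewrite mulmxDl -!scalemxAl !scalerDr addrACA -scalerDl.
    by rewrite [mu + _]addrC subrK scale1r.
  exact: Cc.
- by move=> z _ i; rewrite leqNgt ltn_ord.
- exact: small_mul_pos.
move=> c _ cb eta eta0.
have pball : ball y delta (y + c *m T).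
  apply: ball_rVP => // j.
  have -> : y ord0 j - (y + c *m T) ord0 j = - (c *m T) ord0 j.
    by rewrite [(y + _) _ _]mxE; ring.
  rewrite normrN.
  apply: le_lt_trans (mulmx_entry_bound (a := c) (t := delta / (KT + 1) / 2) T j _ cb) _.
    by apply: ltW; apply: small_mul_pos.
  exact: small_mul.
have Dp : D (y + c *m T).
  have h := submx_trans (submxMl c T) TM.
  have [D' E] := submxP h.
  have Ha : aff D (y + c *m T) by rewrite E; exact: aff_comb.
  exact: (Hri (y + c *m T) pball Ha).
pose e2 := eta / (KP + 1) / 2.
have e20 : 0 < e2 by apply: small_mul_pos.
have cl := DC _ Dp.
have nb := nbhsx_ballx (y + c *m T) e2 e20.
have [z [Cz bz]] := cl _ nb.
exists ((z - y) *m pinvmx T); split.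
  rewrite /Z' mulmxKpV; first by rewrite addrC subrK.
  by apply/subT/span/CD.
move=> j.
have E : (z - (y + c *m T)) *m pinvmx T = (z - y) *m pinvmx T - c.
  by rewrite opprD addrA mulmxBl (mulmxKp Tfree).
have -> : ((z - y) *m pinvmx T) ord0 j - c ord0 j = ((z - (y + c *m T)) *m pinvmx T) ord0 j.
  by rewrite E [RHS]mxE [X in _ = _ + X]mxE.
apply: le_lt_trans (mulmx_entry_bound (t := e2) (pinvmx T) j _ _) _.
- exact: ltW.
- move=> i; have h := ball_rV_entry i bz; apply: ltW.
  rewrite [(z - _) _ _]mxE mxE; by rewrite distrC in h.
exact: small_mul.
Qed.
Lemma dotv_bound n (w d : 'rV[R]_n) t : 0 <= t -> (forall j, `|d ord0 j| <= t) ->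
  `|dotv w d| <= (\sum_j `|w ord0 j|) * t.
Proof.
move=> t0 Hd; rewrite /dotv; apply: le_trans (ler_norm_sum _ _ _) _.
rewrite mulr_suml; apply: ler_sum => j _; rewrite normrM.
by apply: ler_wpM2l => //.
Qed.

Lemma dotv_aff n (g a b c : 'rV[R]_n) mu :
  dotv g (mu *: a + (1 - mu) *: b - c) = mu * dotv g (a - c) + (1 - mu) * dotv g (b - c).
Proof.
rewrite /dotv !mulr_sumr -big_split; apply: eq_bigr => j _ /=; rewrite !mxE; ring.
Qed.

Lemma cl_le n m (E : set ('rV[R]_n * 'rV[R]_m)) (w1 c1 : 'rV[R]_n) (w2 c2 : 'rV[R]_m) k :
  (forall z, E z -> dotv w1 (z.1 - c1) + dotv w2 (z.2 - c2) <= k) ->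
  forall z, closure E z -> dotv w1 (z.1 - c1) + dotv w2 (z.2 - c2) <= k.
Proof.
move=> HE z cz; rewrite leNgt; apply/negP => hk.
set f := fun z : 'rV[R]_n * 'rV[R]_m => dotv w1 (z.1 - c1) + dotv w2 (z.2 - c2).
pose K := \sum_j `|w1 ord0 j| + \sum_j `|w2 ord0 j|.
have K0 : 0 <= K by rewrite addr_ge0 // sumr_ge0.
pose del := f z - k.
have del0 : 0 < del by rewrite /del subr_gt0.
pose eta := del / (K + 1) / 2.
have eta0 : 0 < eta by apply: small_mul_pos.
have [q [Eq bq]] := cz _ (nbhsx_ballx z eta eta0).
case: bq => b1 b2.
have h1 : `|dotv w1 (q.1 - z.1)| <= (\sum_j `|w1 ord0 j|) * eta.
  apply: dotv_bound; first exact: ltW.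
  move=> j; have := ball_rV_entry j b1; rewrite distrC => h; apply: ltW.
  by rewrite [(q.1 - _) _ _]mxE mxE.
have h2 : `|dotv w2 (q.2 - z.2)| <= (\sum_j `|w2 ord0 j|) * eta.
  apply: dotv_bound; first exact: ltW.
  move=> j; have := ball_rV_entry j b2; rewrite distrC => h; apply: ltW.
  by rewrite [(q.2 - _) _ _]mxE mxE.
have Eq' := HE _ Eq.
have e1 : dotv w1 (q.1 - c1) = dotv w1 (z.1 - c1) + dotv w1 (q.1 - z.1).
  by rewrite -dotvDr; congr dotv; apply/rowP => j; rewrite !mxE; ring.
have e2 : dotv w2 (q.2 - c2) = dotv w2 (z.2 - c2) + dotv w2 (q.2 - z.2).
  by rewrite -dotvDr; congr dotv; apply/rowP => j; rewrite !mxE; ring.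
have hK : K * eta < del by rewrite mulrC; apply: small_mul.
move: Eq'; rewrite e1 e2 => Eq'.
rewrite /K mulrDl in hK.
move: h1 h2; rewrite !ler_norml => /andP [h1 _] /andP [h2 _].
move: hK h1 h2; move: (\sum_j `|w1 ord0 j| * eta) (\sum_j `|w2 ord0 j| * eta) => a1 a2 hK h1 h2.
move: hK; rewrite /del /f /=; lra.
Qed.
Lemma proj_closure n m (E : set ('rV[R]_n * 'rV[R]_m)) x a :
  closure E (x, a) -> closure [set x | exists a, E (x, a)] x.
Proof.
move=> cE B /nbhs_ballP [e e0 eB].
have [q [Eq bq]] := cE _ (nbhsx_ballx (x, a) e e0).
case: bq => b1 _; exists q.1; split; last exact: eB.
by exists q.2; case: q Eq b1.
Qed.

Lemma ri_in_C n (C D : set 'rV[R]_n) y delta : cvx C -> C `<=` D -> D `<=` closure C ->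
  0 < delta -> (ball y delta `&` aff D `<=` D) ->
  forall p, ball y delta p -> aff D p -> C p.
Proof.
move=> Cc CD DC d0 Hri p bp ap.
have Dp : D p := Hri p (conj bp ap).
move: (bp); rewrite -ball_normE /ball_ /= => hp.
apply: (core_R Cc CD DC Dp (delta := delta - `|y - p|)).
  by rewrite subr_gt0.
move=> q bq aq; apply: Hri; split => //.
move: bq; rewrite -ball_normE /ball_ /= => hq.
have := ler_normD (y - p) (p - q); rewrite addrA subrK => h.
lra.
Qed.

Lemma aff2 n (D : set 'rV[R]_n) y x s : D y -> D x -> aff D (y + s *: (y - x)).
Proof.
move=> Dy Dx.
have := @aff_comb n D y 1 (x - y) (const_mx (- s)) Dy.
have -> : const_mx (- s) *m (x - y) = s *: (y - x).
  by apply/rowP => j; rewrite !mxE big_ord1 !mxE; ring.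
apply => i; by rewrite row_rV addrC subrK.
Qed.
Lemma small_s (m a K : R) : 0 < m -> 0 <= a -> a < K -> m / K * a < m.
Proof.
move=> m0 a0 aK; have K0 : 0 < K by apply: le_lt_trans aK.
by rewrite -[ltRHS](divfK (lt0r_neq0 K0)) ltr_pM2l ?divr_gt0.
Qed.

Lemma sum_incl n m (F1 F2 : 'rV[R]_n -> set 'rV[R]_m) eps xbar v y1 y2 e1 e2 u1 u2 :
  e1 + e2 = eps -> eps_coder e1 F1 xbar y1 v u1 -> eps_coder e2 F2 xbar y2 v u2 ->
  eps_coder eps (map_sum F1 F2) xbar (y1 + y2) v (u1 + u2).
Proof.
move=> es h1 h2 [x y] hg; case: hg => a [b [Fa [Fb ey]]]; rewrite /= in ey.
have := h1 (x, a) Fa; have := h2 (x, b) Fb; rewrite /dotp /= ey dotvDl.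
have -> : a + b - (y1 + y2) = (a - y1) + (b - y2) by apply/rowP => j; rewrite !mxE; ring.
rewrite (dotvDr (- v) (a - y1) (b - y2)); lra.
Qed.

Lemma sub_dir n m (F1 F2 : 'rV[R]_n -> set 'rV[R]_m) eps (E1 E2 : set ('rV[R]_n * 'rV[R]_m))
    x0 d1 d2 xbar v y1 y2 u :
  0 <= eps -> convex_pair E1 -> E1 `<=` gph F1 -> gph F1 `<=` closure E1 ->
  convex_pair E2 -> E2 `<=` gph F2 -> gph F2 `<=` closure E2 ->
  0 < d1 -> (ball x0 d1 `&` aff (dom F1) `<=` dom F1) -> dom F1 x0 ->
  0 < d2 -> (ball x0 d2 `&` aff (dom F2) `<=` dom F2) -> dom F2 x0 ->
  F1 xbar y1 -> F2 xbar y2 ->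
  eps_coder eps (map_sum F1 F2) xbar (y1 + y2) v u ->
  exists e1 e2, 0 <= e1 /\ 0 <= e2 /\ e1 + e2 = eps /\
    mink_sum (eps_coder e1 F1 xbar y1 v) (eps_coder e2 F2 xbar y2 v) u.
Proof.
move=> eps0 cE1 E1G G1E cE2 E2G G2E d1p ri1 D1x0 d2p ri2 D2x0 F1y1 F2y2 hu.
pose C1 := [set x | exists a, E1 (x, a)].
pose C2 := [set x | exists a, E2 (x, a)].
have cC1 : cvx C1.
  move=> z1 z2 mu [a1 h1] [a2 h2] mu0 mu1; exists (mu *: a1 + (1 - mu) *: a2).
  exact: (cE1 (z1, a1) (z2, a2) mu h1 h2 mu0 mu1).
have cC2 : cvx C2.
  move=> z1 z2 mu [a1 h1] [a2 h2] mu0 mu1; exists (mu *: a1 + (1 - mu) *: a2).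
  exact: (cE2 (z1, a1) (z2, a2) mu h1 h2 mu0 mu1).
have C1D : C1 `<=` dom F1 by move=> x [a h]; exists a; exact: (E1G _ h).
have C2D : C2 `<=` dom F2 by move=> x [a h]; exists a; exact: (E2G _ h).
have DC1 : dom F1 `<=` closure C1.
  by move=> x [a Fa]; apply: (proj_closure (a := a)); exact: G1E.
have DC2 : dom F2 `<=` closure C2.
  by move=> x [a Fa]; apply: (proj_closure (a := a)); exact: G2E.
have inC1 := ri_in_C cC1 C1D DC1 d1p ri1.
have inC2 := ri_in_C cC2 C2D DC2 d2p ri2.
pose P := fun x a => dotv u (x - xbar) + dotv (- v) (a - y1).
pose Q := fun (x : 'rV[R]_n) b => dotv (- v) (b - y2).
pose S := fun z t => exists x a x' b,
  [/\ E1 (x, a), E2 (x', b), z = x' - x & t = P x a + Q x' b].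
have [g Hg] : exists g, forall z t, S z t -> t <= eps + dotv g z.
  apply: hb_core.
  - move=> z1 t1 z2 t2 mu [x1 [a1 [x1' [b1 [h1 h1' -> ->]]]]]
      [x2 [a2 [x2' [b2 [h2 h2' -> ->]]]]] mu0 mu1.
    exists (mu *: x1 + (1 - mu) *: x2), (mu *: a1 + (1 - mu) *: a2),
      (mu *: x1' + (1 - mu) *: x2'), (mu *: b1 + (1 - mu) *: b2); split.
    + exact: (cE1 (x1, a1) (x2, a2) mu h1 h2 mu0 mu1).
    + exact: (cE2 (x1', b1) (x2', b2) mu h1' h2' mu0 mu1).
    + by apply/rowP => j; rewrite !mxE; ring.
    + rewrite /P /Q !dotv_aff; ring.
  - move=> t [x [a [x' [b [h h' ez et]]]]]; rewrite et.
    have ex : x' = x by apply/subr0_eq; rewrite -ez.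
    subst x'.
    have hg : gph (map_sum F1 F2) (x, a + b).
      by exists a, b; split; [exact: (E1G _ h) | split; [exact: (E2G _ h') | done]].
    have := hu _ hg; rewrite /dotp /=.
    have -> : a + b - (y1 + y2) = (a - y1) + (b - y2) by apply/rowP => j; rewrite !mxE; ring.
    rewrite (dotvDr (- v) (a - y1) (b - y2)) /P /Q; lra.
  - move=> z t [x [a [x' [b [h h' -> _]]]]].
    pose K := `|x0 - x| + `|x0 - x'| + 1.
    pose mn := Num.min d1 d2.
    have mn0 : 0 < mn by rewrite lt_min d1p d2p.
    pose s := mn / K.
    have K0 : 0 < K by rewrite ltr_pwDr // addr_ge0.
    have s0 : 0 < s by rewrite divr_gt0.
    have bp : forall (d : R) (w : 'rV[R]_n), mn <= d -> `|x0 - w| < K ->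
        ball x0 d (x0 + s *: (x0 - w)).
      move=> d w hd hw; rewrite -ball_normE /ball_ /=.
      have -> : x0 - (x0 + s *: (x0 - w)) = - (s *: (x0 - w)).
        by apply/rowP => j; rewrite !mxE; ring.
      rewrite normrN normrZ gtr0_norm //.
      apply: lt_le_trans hd; exact: small_s.
    have hx : C1 x by exists a.
    have hx' : C2 x' by exists b.
    have [a1 ha1] : C1 (x0 + s *: (x0 - x)).
      apply: inC1; last exact: aff2 D1x0 (C1D _ hx).
      apply: bp; first by rewrite ge_min lexx.
      by rewrite /K -addrA ltr_pwDr // ltr_pwDl ?ltr01.
    have [b2 hb2] : C2 (x0 + s *: (x0 - x')).
      apply: inC2; last exact: aff2 D2x0 (C2D _ hx').
      apply: bp; first by rewrite ge_min lexx orbT.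
      by rewrite /K addrAC ltr_pwDl // addr_ge0.
    exists s, (P (x0 + s *: (x0 - x)) a1 + Q (x0 + s *: (x0 - x')) b2); split => //.
    exists (x0 + s *: (x0 - x)), a1, (x0 + s *: (x0 - x')), b2; split => //.
    by apply/rowP => j; rewrite !mxE; ring.
pose u1 := u + g.
pose u2 := - g.
pose alpha := fun x a => dotv u1 (x - xbar) + dotv (- v) (a - y1).
pose beta := fun x b => dotv u2 (x - xbar) + dotv (- v) (b - y2).
have AB : forall x a x' b, E1 (x, a) -> E2 (x', b) -> alpha x a + beta x' b <= eps.
  move=> x a x' b h h'.
  have := Hg (x' - x) (P x a + Q x' b) (ex_intro _ x (ex_intro _ a (ex_intro _ x'
     (ex_intro _ b (And4 h h' erefl erefl))))).
  rewrite /alpha /beta /u1 /u2 dotvDl dotvNl.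
  have -> : x' - x = (x' - xbar) - (x - xbar) by apply/rowP => j; rewrite !mxE; ring.
  rewrite dotvBr /P /Q !dotvNl; lra.
have [[q1x q1a] Eq1] : exists q, E1 q.
  by have [q [Eq _]] := G1E (xbar, y1) F1y1 setT filterT; exists q.
have [[q2x q2b] Eq2] : exists q, E2 q.
  by have [q [Eq _]] := G2E (xbar, y2) F2y2 setT filterT; exists q.
pose B := [set t | exists x b, E2 (x, b) /\ t = beta x b].
have Bne : B !=set0 by exists (beta q2x q2b), q2x, q2b.
have hsB : has_sup B.
  split => //; exists (eps - alpha q1x q1a) => t [x [b [h ->]]].
  have := AB _ _ _ _ Eq1 h; lra.
pose e2 := sup B.
pose e1 := eps - e2.
have beta_le : forall z, gph F2 z -> beta z.1 z.2 <= e2.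
  move=> z hz; rewrite /beta; apply: (cl_le (E := E2)) (G2E _ hz) => -[x b] h /=.
  by apply: sup_upper_bound hsB _ _; exists x, b.
have alpha_le : forall z, gph F1 z -> alpha z.1 z.2 <= e1.
  move=> z hz; rewrite /alpha; apply: (cl_le (E := E1)) (G1E _ hz) => -[x a] h /=.
  have : e2 <= eps - alpha x a.
    apply: ge_sup => // t [x' [b [h' ->]]].
    have := AB _ _ _ _ h h'; lra.
  rewrite /e1 /alpha; lra.
exists e1, e2; split.
  have := alpha_le (xbar, y1) F1y1; rewrite /alpha /= !subrr !dotv0r; lra.
split.
  have := beta_le (xbar, y2) F2y2; rewrite /beta /= !subrr !dotv0r; lra.
split; first by rewrite /e1 subrK.
exists u1, u2; split; last split; last by rewrite /u1 /u2 addrK.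
  by move=> z hz; rewrite /dotp /=; exact: alpha_le.
by move=> z hz; rewrite /dotp /=; exact: beta_le.
Qed.
End Aux.

Theorem mainTheorem6 (R : realType) (n m : nat)
    (F1 F2 : 'rV[R]_n -> set 'rV[R]_m) (eps : R) :
  0 <= eps ->
  nearly_convex_map F1 -> nearly_convex_map F2 ->
  ri (dom F1) `&` ri (dom F2) !=set0 ->
  forall (xbar : 'rV[R]_n) (ybar : 'rV[R]_m),
  gph (map_sum F1 F2) (xbar, ybar) ->
  forall (v y1 y2 : 'rV[R]_m),
  ybar = y1 + y2 -> F1 xbar y1 -> F2 xbar y2 ->
  eps_coder eps (map_sum F1 F2) xbar ybar v =
  [set u | exists e1 e2 : R, 0 <= e1 /\ 0 <= e2 /\ e1 + e2 = eps /\
      mink_sum (eps_coder e1 F1 xbar y1 v) (eps_coder e2 F2 xbar y2 v) u].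
Proof.
move=> eps0 [E1 [cE1 [E1G G1E]]] [E2 [cE2 [E2G G2E]]].
move=> [x0 [[D1x0 [d1 [d1p ri1]]] [D2x0 [d2 [d2p ri2]]]]] xbar ybar _ v y1 y2 -> F1y1 F2y2.
apply/seteqP; split => u.
  move=> hu.
  exact: (sub_dir eps0 cE1 E1G G1E cE2 E2G G2E d1p ri1 D1x0 d2p ri2 D2x0 F1y1 F2y2 hu).
move=> [e1 [e2 [_ [_ [es [u1 [u2 [h1 [h2 ->]]]]]]]]].
exact: sum_incl es h1 h2.
Qed.
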